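(* Let $\xi_k(x)=\xi_{k1}x_1+\xi_{k2}x_2+\xi_{k0}$, $k=0,1,2$, be affine functions on $\mathbb{R}^2$, let $E$ be a segment contained in the line $\{x_2=mx_1+q\}$, and assume $\xi_{21}+m\xi_{22}=0$ and $\xi_2>0$ on $E$. Let $h(x)=\frac{\xi_1(x)^2}{\xi_2(x)}+\xi_0(x)+I_E(x)$. Then every piece of the conjugate $h^*$ that is a quadratic polynomial $\zeta_{11}s_1^2+\zeta_{12}s_1s_2+\zeta_{22}s_2^2+\zeta_{10}s_1+\zeta_{01}s_2+\zeta_{00}$ is parabolic, i.e. satisfies $\zeta_{12}^2-4\zeta_{11}\zeta_{22}=0$.
   Context: $I_E$ is the indicator function of $E$ ($0$ on $E$, $+\infty$ outside). The conjugate is $h^*(s)=\sup_{x\in\mathbb{R}^2}(s^Tx-h(x))$, a piecewise function of $s=(s_1,s_2)\in\mathbb{R}^2$ whose pieces are affine or quadratic polynomials. Such rational functions $\xi_1^2/\xi_2+\xi_0$ arise as pieces of the convex envelope of a bivariate quadratic over a polytope, and the restriction to an edge of the polytope on which $\xi_{21}+m\xi_{22}=0$ is the case in which a quadratic expression appears in the conjugate. *)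

(* Defs.v *)
From HB Require Import structures.
From mathcomp Require Import all_boot all_order all_algebra.
From mathcomp Require Import all_classical all_reals all_analysis.
Set Implicit Arguments. Unset Strict Implicit. Unset Printing Implicit Defensive.
Import Order.TTheory GRing.Theory Num.Theory.
Local Open Scope classical_set_scope.
Local Open Scope ring_scope.

Definition affine2 {R : realType} (c1 c2 c0 : R) (x : R * R) : R :=
  c1 * x.1 + c2 * x.2 + c0.

Definition segment2 {R : realType} (p r : R * R) : set (R * R) :=
  [set x | exists2 t : R, 0 <= t <= 1 &
     x = (p.1 + t * (r.1 - p.1), p.2 + t * (r.2 - p.2))].

Definition add_indicator {R : realType} (f : R * R -> R) (E : set (R * R))
  (x : R * R) : \bar R :=
  if x \in E then (f x)%:E else +oo%E.

Definition conjugate2 {R : realType} (h : R * R -> \bar R) (s : R * R) : \bar R :=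
  ereal_sup [set ((s.1 * x.1 + s.2 * x.2)%:E - h x)%E | x in [set: R * R]].

Definition quad2 {R : realType} (z11 z12 z22 z10 z01 z00 : R) (s : R * R) : R :=
  z11 * s.1 ^+ 2 + z12 * s.1 * s.2 + z22 * s.2 ^+ 2 + z10 * s.1 + z01 * s.2 + z00.

(* Main.v *)
Require Import Defs.
From HB Require Import structures.
From mathcomp Require Import all_boot all_order all_algebra.
From mathcomp Require Import all_classical all_reals all_analysis.
From mathcomp Require Import ring lra.
Import Order.TTheory GRing.Theory Num.Theory numFieldNormedType.Exports.
Local Open Scope classical_set_scope.
Local Open Scope ring_scope.

Lemma shift_le (R : realType) (f : R * R -> R) (E : set (R * R)) (s t : R * R) (c : R) :
  (forall x, E x -> t.1 * x.1 + t.2 * x.2 = s.1 * x.1 + s.2 * x.2 + c) ->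
  (conjugate2 (add_indicator f E) t <= conjugate2 (add_indicator f E) s + c%:E)%E.
Proof.
move=> H; apply: ge_ereal_sup => _ [x _ <-].
rewrite /add_indicator; case: ifPn => [xE|_]; last by rewrite /= addeNy leNye.
rewrite H; last exact/set_mem.
have -> : ((s.1 * x.1 + s.2 * x.2 + c)%:E - (f x)%:E
   = (s.1 * x.1 + s.2 * x.2 - f x)%:E + c%:E)%E.
  by rewrite -!EFinD; congr (_%:E); ring.
apply: leeD2r; apply: ereal_sup_ubound; exists x => //.
by rewrite /add_indicator xE.
Qed.

Theorem proposition4 (R : realType)
  (x01 x02 x00 x11 x12 x10 x21 x22 x20 : R) (m q : R) (p r : R * R)
  (hp : p.2 = m * p.1 + q) (hr : r.2 = m * r.1 + q)
  (hxi : x21 + m * x22 = 0)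
  (hpos : forall x, segment2 p r x -> 0 < affine2 x21 x22 x20 x)
  (U : set (R * R)) (hU : open U) (hU0 : U !=set0)
  (z11 z12 z22 z10 z01 z00 : R)
  (hpiece : forall s, U s ->
     conjugate2
       (add_indicator
          (fun x => affine2 x11 x12 x10 x ^+ 2 / affine2 x21 x22 x20 x
                    + affine2 x01 x02 x00 x)
          (segment2 p r)) s
     = (quad2 z11 z12 z22 z10 z01 z00 s)%:E) :
  z12 ^+ 2 - 4 * z11 * z22 = 0.
Proof.
set f := (fun x => affine2 x11 x12 x10 x ^+ 2 / affine2 x21 x22 x20 x + affine2 x01 x02 x00 x) in hpiece.
set Q := quad2 z11 z12 z22 z10 z01 z00.
have Hshift : forall (k : R) (s : R * R), U s -> U (s.1 + - (k * m), s.2 + k) ->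
    Q (s.1 + - (k * m), s.2 + k) = Q s + k * q.
  move=> k s Us Ut.
  have H1 := @shift_le R f (segment2 p r) s (s.1 + - (k * m), s.2 + k) (k * q).
  have H2 := @shift_le R f (segment2 p r) (s.1 + - (k * m), s.2 + k) s (- (k * q)).
  have seg : forall x, segment2 p r x -> x.2 = m * x.1 + q.
    by move=> x [t _ ->] /=; rewrite hp hr; ring.
  have {}H1 : ((Q (s.1 + - (k * m), s.2 + k))%:E <= (Q s)%:E + (k * q)%:E)%E.
    rewrite -!hpiece //; apply: H1 => x /seg /= ->; ring.
  have {}H2 : ((Q s)%:E <= (Q (s.1 + - (k * m), s.2 + k))%:E + (- (k * q))%:E)%E.
    rewrite -!hpiece //; apply: H2 => x /seg /= ->; ring.
  rewrite -EFinD lee_fin in H1; rewrite -EFinD lee_fin in H2.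
  apply/eqP; rewrite eq_le H1 /=; lra.
case: hU0 => s0 Us0.
have : nbhs s0 U by exact: hU.
case/nbhs_ballP => e /= e0 hball.
have inb : forall y : R * R, `|s0.1 - y.1| < e -> `|s0.2 - y.2| < e -> U y.
  move=> y h1 h2; apply: hball; split => /=; rewrite -ball_normE /ball_ /=; by [].
pose k := (e / 3) / (1 + `|m|).
pose mu := e / 3.
have hm0 : 0 < 1 + `|m| by rewrite ltr_pwDl.
have k0 : 0 < k by rewrite divr_gt0 // divr_gt0.
have hk : k <= e / 3.
  rewrite /k ler_pdivrMr // mulrDr mulr1 lerDl; apply: mulr_ge0 => //; apply: divr_ge0; exact: ltW.
have hkm : - (e / 3) <= k * m <= e / 3.
  rewrite -ler_norml normrM gtr0_norm // /k mulrAC ler_pdivrMr // ler_wpM2l ?divr_ge0 ?ltW //; have := normr_ge0 m; lra.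
case/andP: hkm => hkm1 hkm2.
have mu0 : 0 < mu by rewrite /mu divr_gt0.
have hmu : mu = e / 3 by [].
have Hin : forall a b : R, - (2 * e / 3) <= a <= 2 * e / 3 -> - (2 * e / 3) <= b <= 2 * e / 3 ->
    U (s0.1 + a, s0.2 + b).
  move=> a b /andP[a1 a2] /andP[b1 b2]; apply: inb => /=;
    rewrite ltr_norml; apply/andP; split; lra.
have H' : forall a b, 0 <= a <= e / 3 -> 0 <= b <= e / 3 ->
   Q (s0.1 + a + - (k * m), s0.2 + b + k) = Q (s0.1 + a, s0.2 + b) + k * q.
  move=> a b /andP[a1 a2] /andP[b1 b2].
  apply: (Hshift k (s0.1 + a, s0.2 + b)).
    by apply: Hin; apply/andP; split; lra.
  have := Hin (a + - (k * m)) (b + k); rewrite /= !addrA; apply.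
  apply/andP; split; lra. apply/andP; split; lra.
have E0 := H' 0 0.
have E1 := H' mu 0.
have E2 := H' 0 mu.
have h0 : (0:R) <= 0 <= e / 3 by apply/andP; split; lra.
have h1 : 0 <= mu <= e / 3 by apply/andP; split; lra.
move: (E0 h0 h0) (E1 h1 h0) (E2 h0 h1) => {E0 E1 E2} E0 E1 E2.
rewrite /Q /quad2 /= in E0 E1 E2.
have A : (mu * k) * (z12 - 2 * m * z11) = 0.
  lra.
have B : (mu * k) * (2 * z22 - m * z12) = 0.
  lra.
have nz : mu * k != 0 by rewrite mulf_neq0 // gt_eqF.
move/eqP: A; rewrite mulf_eq0 (negbTE nz) /= => /eqP A.
move/eqP: B; rewrite mulf_eq0 (negbTE nz) /= => /eqP B.
have -> : z12 ^+ 2 - 4 * z11 * z22 = z12 * (z12 - 2 * m * z11) - 2 * z11 * (2 * z22 - m * z12) by ring.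
by rewrite A B; ring.
Qed.
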